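(* Let $g:\{0,1\}^n\to\{0,1\}^{m(n)}$ be computable by polynomial-size circuits with $m(n)>n$. If the ensemble $(g(U_n))_{n\in\mathbb{N}}$ is both $\mathsf{NP}/\mathsf{poly}$-unpredictable and $\mathsf{coNP}/\mathsf{poly}$-unpredictable (i.e. $\cup$-unpredictable), then $g$ is super-bits (in the polynomial-security sense below).
   Context: $U_n$ is the uniform distribution on $\{0,1\}^n$. A nondeterministic circuit $D$ accepts $x$ iff some assignment to its nondeterministic inputs makes it output 1; a co-nondeterministic circuit rejects $x$ iff some assignment makes it output 0. $\mathsf{NP}/\mathsf{poly}$ (resp. $\mathsf{coNP}/\mathsf{poly}$) algorithms are nondeterministic (resp. co-nondeterministic) polynomial-size circuit families. $g$ is called super-bits if for every nondeterministic polynomial-size circuit family $D$, every polynomial $p$ and all sufficiently large $n$, $\Pr[D(U_{m(n)})=1]-\Pr[D(g(U_n))=1]<1/p(n)$. For $\mathcal{K}\in\{\mathsf{NP}/\mathsf{poly},\mathsf{coNP}/\mathsf{poly}\}$, an ensemble $(Z_n)$ is $\mathcal{K}$-predictable if there exist an algorithm $\mathcal{A}$ in $\mathcal{K}$, a polynomial $p$, and infinitely many $n$ each with some $i=i(n)<|Z_n|$ such that $\Pr[\mathcal{A}(Z_n[1\ldots i])=Z_n[i+1]]\ge 1/2+1/p(n)$, and $\mathcal{K}$-unpredictable otherwise. *)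

(* Defs.v *)
From mathcomp Require Import all_boot all_order all_algebra.
Set Implicit Arguments. Unset Strict Implicit. Unset Printing Implicit Defensive.
Import Order.TTheory GRing.Theory Num.Theory.

Definition polyN (a : seq nat) (n : nat) : nat :=
  \sum_(k < size a) nth 0 a k * n ^ k.

(* a nonzero polynomial (has some nonzero coefficient); it is > 0 at every n >= 1 *)
Definition nonzero_poly (a : seq nat) : bool := has (fun c => c != 0) a.

(* Wire j, for j < |x|, is input bit j; gate number k defines wire |x| + k
   and may only read previously defined wires (out-of-range reads give false). *)
Inductive gate : Type :=
| GNot of nat
| GAnd of nat & nat
| GOr  of nat & nat.

Definition gate_eval (vs : seq bool) (g : gate) : bool :=
  match g with
  | GNot a => ~~ nth false vs a
  | GAnd a b => nth false vs a && nth false vs b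
  | GOr a b => nth false vs a || nth false vs b
  end.

Record circuit := Circuit { gates : seq gate; outs : seq nat }.

Definition wires (C : circuit) (x : seq bool) : seq bool :=
  foldl (fun vs g => rcons vs (gate_eval vs g)) x (gates C).

Definition ceval (C : circuit) (x : seq bool) : seq bool :=
  map (nth false (wires C x)) (outs C).

Definition ceval1 (C : circuit) (x : seq bool) : bool := nth false (ceval C x) 0.

Definition csize (C : circuit) : nat := size (gates C) + size (outs C).

(* a circuit with nondeterministic (witness) inputs appended after the real input *)
Record ndcircuit := NDCircuit { ncirc : circuit; nwit : nat }.

Definition ndsize (D : ndcircuit) : nat := csize (ncirc D) + nwit D.

Definition nd_eval (D : ndcircuit) (x : seq bool) : bool :=
  [exists w : (nwit D).-tuple bool, ceval1 (ncirc D) (x ++ w)].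

Definition cond_eval (D : ndcircuit) (x : seq bool) : bool :=
  [forall w : (nwit D).-tuple bool, ceval1 (ncirc D) (x ++ w)].

Inductive nd_class := NPpoly | coNPpoly.

Definition class_eval (K : nd_class) (D : ndcircuit) (x : seq bool) : bool :=
  match K with NPpoly => nd_eval D x | coNPpoly => cond_eval D x end.

Definition poly_size_nd (D : nat -> ndcircuit) : Prop :=
  exists a : seq nat, forall n, ndsize (D n) <= polyN a n.

Definition poly_size_circ (C : nat -> circuit) : Prop :=
  exists a : seq nat, forall n, csize (C n) <= polyN a n.

Local Open Scope ring_scope.

Definition prob (n : nat) (P : pred (n.-tuple bool)) : rat :=
  (#|[pred x | P x]|)%:R / (2 ^ n)%:R.

Definition generator (m : nat -> nat) := forall n, n.-tuple bool -> (m n).-tuple bool.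

Definition poly_computable (m : nat -> nat) (g : generator m) : Prop :=
  exists C : nat -> circuit, poly_size_circ C /\
    forall n (x : n.-tuple bool), ceval (C n) x = g n x.

Definition predictable (K : nd_class) (m : nat -> nat) (g : generator m) : Prop :=
  exists A : nat -> ndcircuit, poly_size_nd A /\
  exists p : seq nat, nonzero_poly p /\
  forall N : nat, exists n : nat, (N <= n)%N /\
  exists i : nat, (i < m n)%N /\
    prob [pred x : n.-tuple bool |
            class_eval K (A n) (take i (g n x)) == nth false (g n x) i]
    >= 1 / 2 + 1 / (polyN p n)%:R.

Definition unpredictable K m (g : generator m) : Prop := ~ predictable K g.

Definition super_bits (m : nat -> nat) (g : generator m) : Prop :=
  forall D : nat -> ndcircuit, poly_size_nd D ->
  forall p : seq nat, nonzero_poly p ->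
  exists N : nat, forall n : nat, (N <= n)%N ->
    prob [pred y : (m n).-tuple bool | nd_eval (D n) y]
    - prob [pred x : n.-tuple bool | nd_eval (D n) (g n x)]
    < 1 / (polyN p n)%:R.

(* Main.v *)
Require Import Defs.
From mathcomp Require Import all_boot all_order all_algebra.
From Stdlib Require Import ClassicalEpsilon Classical.
From mathcomp Require Import zify ring lra.
Set Implicit Arguments. Unset Strict Implicit. Unset Printing Implicit Defensive.
Import Order.TTheory GRing.Theory Num.Theory.

Definition step (vs : seq bool) (g : gate) := rcons vs (gate_eval vs g).

Lemma size_foldl_step vs gs : size (foldl step vs gs) = size vs + size gs.
Proof.
elim: gs vs => [|g gs IH] vs /=; first by rewrite addn0.
by rewrite IH size_rcons addSnnS.
Qed.

Definition shift_gate (o : nat) (g : gate) :=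
  match g with
  | GNot a => GNot (o + a)
  | GAnd a b => GAnd (o + a) (o + b)
  | GOr a b => GOr (o + a) (o + b)
  end.

Lemma gate_eval_shift vs0 v g :
  gate_eval (vs0 ++ v) (shift_gate (size vs0) g) = gate_eval v g.
Proof.
have E a : nth false (vs0 ++ v) (size vs0 + a) = nth false v a.
  by rewrite nth_cat ltnNge leq_addr /= addKn.
by case: g => [a|a b|a b] /=; rewrite !E.
Qed.

Lemma foldl_shift vs0 v gs :
  foldl step (vs0 ++ v) (map (shift_gate (size vs0)) gs) = vs0 ++ foldl step v gs.
Proof.
elim: gs v => [|g gs IH] v //=.
by rewrite /step gate_eval_shift rcons_cat IH.
Qed.

Definition copy_gate (i w : nat) (s : seq bool) (k : nat) : gate :=
  let X := i + w + (i + size s + w) in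
  if k < i then GAnd k k
  else if k < i + size s then (if nth false s (k - i) then GNot X else GAnd X X)
  else GAnd (i + (k - (i + size s))) (i + (k - (i + size s))).

Lemma copy_eval (x wit s u : seq bool) k :
  size u = k -> k < size x + size s + size wit ->
  gate_eval ((x ++ wit) ++ u) (copy_gate (size x) (size wit) s k)
  = nth false (x ++ s ++ wit) k.
Proof.
move=> Hu Hk; rewrite /copy_gate.
case: ltnP => H1.
  by rewrite /= andbb nth_cat size_cat (ltn_addr _ H1) nth_cat H1 nth_cat H1.
case: ltnP => H2.
  have Hd : forall X, size x + size wit + (size x + size s + size wit) <= X ->
     nth false ((x ++ wit) ++ u) X = false.
    move=> X HX; apply: nth_default; rewrite !size_cat Hu.
    apply: leq_trans HX; rewrite leq_add2l; exact: ltnW.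
  have -> : nth false (x ++ s ++ wit) k = nth false s (k - size x).
    rewrite nth_cat ltnNge H1 /= nth_cat.
    by rewrite -(ltn_add2l (size x)) subnKC // H2.
  by case: (nth false s (k - size x)) => /=; rewrite Hd.
rewrite /= andbb.
have Hw : k - (size x + size s) < size wit by rewrite ltn_subLR // addnA.
have -> : nth false (x ++ s ++ wit) k = nth false wit (k - (size x + size s)).
  rewrite nth_cat ltnNge H1 /= nth_cat.
  by rewrite -(ltn_add2l (size x)) subnKC // ltnNge H2 /= subnDA.
by rewrite nth_cat size_cat ltn_add2l Hw nth_cat ltnNge leq_addr /= addKn.
Qed.

Lemma copy_phase (x wit s : seq bool) k :
  k <= size x + size s + size wit ->
  foldl step (x ++ wit) (map (copy_gate (size x) (size wit) s) (iota 0 k))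
  = (x ++ wit) ++ take k (x ++ s ++ wit).
Proof.
elim: k => [|k IH] Hk; first by rewrite take0 cats0.
have Hk' : k < size (x ++ s ++ wit) by rewrite !size_cat addnA.
rewrite -addn1 iotaD add0n map_cat foldl_cat IH ?(ltnW Hk) //= /step.
rewrite copy_eval ?size_take ?Hk' //.
by rewrite addn1 (take_nth false Hk') rcons_cat.
Qed.

Lemma wires_foldl C x : wires C x = foldl step x (gates C).
Proof. by []. Qed.

Definition hw_gates (C : circuit) (i w : nat) (s : seq bool) :=
  map (copy_gate i w s) (iota 0 (i + size s + w)) ++ map (shift_gate (i + w)) (gates C).

Definition hw_pos (C : circuit) i w s :=
  Circuit (hw_gates C i w s) (map (addn (i + w)) (outs C)).

Definition hw_neg (C : circuit) i w s :=
  let V := i + w + (i + size s + w) + size (gates C) in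
  Circuit (rcons (hw_gates C i w s) (GNot (nth V (map (addn (i + w)) (outs C)) 0))) [:: V].

Definition hw (D : ndcircuit) i s (neg : bool) :=
  NDCircuit (if neg then hw_neg (ncirc D) i (nwit D) s else hw_pos (ncirc D) i (nwit D) s)
    (nwit D).

Lemma hw_wires C (x wit s : seq bool) :
  foldl step (x ++ wit) (hw_gates C (size x) (size wit) s)
  = (x ++ wit) ++ wires C (x ++ s ++ wit).
Proof.
rewrite /hw_gates foldl_cat copy_phase // take_oversize ?size_cat ?addnA //.
by rewrite -(size_cat x wit) foldl_shift.
Qed.

Lemma nth_map0 (F : nat -> bool) d (s : seq nat) :
  F d = false -> nth false (map F s) 0 = F (nth d s 0).
Proof. by case: s. Qed.

Lemma ceval1_pos C (x wit s : seq bool) :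
  ceval1 (hw_pos C (size x) (size wit) s) (x ++ wit) = ceval1 C (x ++ s ++ wit).
Proof.
rewrite /ceval1 /ceval /= wires_foldl /= hw_wires -map_comp.
case: (outs C) => [|a l] //=.
by rewrite nth_cat size_cat ltnNge leq_addr /= addKn.
Qed.

Lemma size_wires C x : size (wires C x) = size x + size (gates C).
Proof. by rewrite wires_foldl size_foldl_step. Qed.

Lemma ceval1_neg C (x wit s : seq bool) :
  ceval1 (hw_neg C (size x) (size wit) s) (x ++ wit) = ~~ ceval1 C (x ++ s ++ wit).
Proof.
rewrite /ceval1 /ceval /= wires_foldl /= foldl_rcons hw_wires /step /=.
set W := (x ++ wit) ++ _.
have HW : size W = size x + size wit + (size x + size s + size wit) + size (gates C).
  by rewrite /W size_cat size_wires !size_cat addnA !addnA.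
rewrite nth_rcons HW ltnn eqxx.
case: (outs C) => [|a l] /=.
  by rewrite nth_default // HW.
by rewrite /W nth_cat size_cat ltnNge leq_addr /= addKn.
Qed.

Lemma hw_nd_eval D (x s : seq bool) :
  nd_eval (hw D (size x) s false) x = nd_eval D (x ++ s).
Proof.
apply: eq_existsb => w /=.
by have := ceval1_pos (ncirc D) x w s; rewrite size_tuple catA => ->.
Qed.

Lemma hw_cond_eval D (x s : seq bool) :
  cond_eval (hw D (size x) s true) x = ~~ nd_eval D (x ++ s).
Proof.
rewrite /cond_eval negb_exists; apply: eq_forallb => w /=.
by have := ceval1_neg (ncirc D) x w s; rewrite size_tuple catA => ->.
Qed.

Lemma hw_size D i s b :
  (ndsize (hw D i s b) <= i + size s + 2 * ndsize D + 2)%N.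
Proof.
rewrite /ndsize /csize /hw; case: b => /=;
rewrite /hw_gates ?size_rcons size_cat !size_map size_iota /=; lia.
Qed.

Lemma polyN_cons c a n : polyN (c :: a) n = c + n * polyN a n.
Proof.
rewrite /polyN /= big_ord_recl /= expn0 muln1 big_distrr /=; congr (_ + _).
by apply: eq_bigr => i _; rewrite /bump /= expnS mulnCA.
Qed.

Lemma polyN_nil n : polyN [::] n = 0.
Proof. by rewrite /polyN big_ord0. Qed.

Definition mpoly (C K : nat) := C :: ncons K 0 [:: C].

Lemma polyN_ncons K s n : polyN (ncons K 0 s) n = n ^ K * polyN s n.
Proof.
elim: K => [|K IH]; first by rewrite mul1n.
by rewrite /= polyN_cons IH add0n expnS mulnA.
Qed.

Lemma polyN_mpoly C K n : polyN (mpoly C K) n = C * (1 + n ^ K.+1).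
Proof.
rewrite /mpoly polyN_cons polyN_ncons polyN_cons polyN_nil expnS; lia.
Qed.

Lemma mpoly_nz C K : 0 < C -> nonzero_poly (mpoly C K).
Proof. by move=> HC; rewrite /nonzero_poly /= -lt0n HC. Qed.

Definition cs (a : seq nat) := \sum_(k < size a) nth 0 a k.

Lemma polyN_le a n K : size a <= K.+1 -> polyN a n <= cs a * (1 + n ^ K.+1).
Proof.
move=> Ha; rewrite /polyN /cs big_distrl /=; apply: leq_sum => k _.
rewrite leq_mul2l; apply/orP; right.
case: n => [|n]; first by case: (nat_of_ord k) => [|k']; rewrite ?expn0 ?exp0n // leq_addr.
apply: leq_trans (leq_addl _ _); apply: leq_pexp2l => //.
by have := ltn_ord k; lia.
Qed.

Lemma polyN_pos a n : nonzero_poly a -> 0 < n -> 0 < polyN a n.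
Proof.
move=> /hasP [c Hc Hc0] Hn.
have Hk : index c a < size a by rewrite index_mem.
rewrite /polyN (bigD1 (Ordinal Hk)) //= nth_index //.
apply: leq_trans (leq_addr _ _); rewrite muln_gt0 lt0n Hc0 /=.
by rewrite expn_gt0 Hn.
Qed.

Local Open Scope ring_scope.

Lemma sum_ind (I : finType) (P : pred I) :
  \sum_i ((P i : nat)%:R : rat) = (#|P|)%:R.
Proof.
rewrite -sum1_card natr_sum [RHS]big_mkcond /=; apply: eq_bigr => i _.
by rewrite unfold_in; case: (P i).
Qed.

Lemma card_tup M : #|{: M.-tuple bool}| = (2 ^ M)%N.
Proof. by rewrite card_tuple card_bool. Qed.

Definition flipt M (j : nat) (r : M.-tuple bool) : M.-tuple bool :=
  [tuple (if (i : nat) == j then ~~ tnth r i else tnth r i) | i < M].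

Lemma nth_flipt M j (r : M.-tuple bool) k : (k < M)%N ->
  nth false (flipt j r) k = if k == j then ~~ nth false r k else nth false r k.
Proof.
move=> Hk.
by rewrite -(tnth_nth false _ (Ordinal Hk)) tnth_mktuple (tnth_nth false).
Qed.

Lemma flipt_inv M j : involutive (@flipt M j).
Proof.
move=> r; apply: eq_from_tnth => i; rewrite !tnth_mktuple.
by case: eqP => _; rewrite ?negbK.
Qed.

Lemma drop_flipt M j (r : M.-tuple bool) : drop j.+1 (flipt j r) = drop j.+1 r.
Proof.
apply: (@eq_from_nth _ false); first by rewrite !size_drop !size_tuple.
move=> k; rewrite size_drop size_tuple => Hk.
rewrite !nth_drop nth_flipt; last by rewrite -ltn_subRL.
by rewrite -[_ == _]/(j.+1 + k == j)%N eqn_leq (leqNgt _ j) ltn_addr ?andbF.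
Qed.

Lemma nat_id (c b g0 g1 : bool) :
  let Gc := if c then g1 else g0 in
  let Gnc := if ~~ c then g1 else g0 in
  let Gb := if b then g1 else g0 in
  ((((if c then ~~ Gc else Gc) == b) : nat)
   + (((if ~~ c then ~~ Gnc else Gnc) == b) : nat) + 2 * Gb
   = 1 + Gc + Gnc)%N.
Proof. by case: c; case: b; case: g0; case: g1. Qed.

Lemma per_x M j (Hj : (j < M)%N) (f : seq bool -> bool) (y0 : seq bool)
  (Hy : size y0 = M) :
  2 * \sum_(r : M.-tuple bool)
     (((if nth false r j then ~~ f (take j y0 ++ drop j r) else f (take j y0 ++ drop j r))
        == nth false y0 j : nat)%:R : rat)
  = (2 ^ M)%:R + 2 * (\sum_(r : M.-tuple bool) ((f (take j y0 ++ drop j r) : nat)%:R : rat)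
                    - \sum_(r : M.-tuple bool) ((f (take j.+1 y0 ++ drop j.+1 r) : nat)%:R : rat)).
Proof.
pose X := fun r : M.-tuple bool => (((if nth false r j then ~~ f (take j y0 ++ drop j r)
   else f (take j y0 ++ drop j r)) == nth false y0 j : nat)%:R : rat).
rewrite (_ : \sum_(r : M.-tuple bool) (((if nth false r j then _ else _) == _ : nat)%:R : rat) = \sum_r X r) //.
set H0 := fun r : M.-tuple bool => ((f (take j y0 ++ drop j r) : nat)%:R : rat).
set H1 := fun r : M.-tuple bool => ((f (take j.+1 y0 ++ drop j.+1 r) : nat)%:R : rat).
have inj : injective (@flipt M j) by apply: inv_inj; exact: flipt_inv.
have RX : \sum_r X r = \sum_r X (flipt j r) by apply: (reindex_inj inj).
have R0 : \sum_r H0 r = \sum_r H0 (flipt j r) by apply: (reindex_inj inj).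
have pt : forall r, X r + X (flipt j r) + 2 * H1 r = 1 + H0 r + H0 (flipt j r).
  move=> r; rewrite /X /H0 /H1.
  have Hjr : (j < size r)%N by rewrite size_tuple.
  rewrite (drop_nth false Hjr) (drop_nth false (_ : j < size (flipt j r))%N) ?size_tuple //.
  rewrite drop_flipt nth_flipt // eqxx.
  rewrite (take_nth false (_ : j < size y0)%N) ?Hy // cat_rcons.
  have := nat_id (nth false r j) (nth false y0 j)
     (f (take j y0 ++ false :: drop j.+1 r)) (f (take j y0 ++ true :: drop j.+1 r)).
  case: (nth false r j); case: (nth false y0 j);
  case: (f (take j y0 ++ false :: drop j.+1 r)); case: (f (take j y0 ++ true :: drop j.+1 r));
  move=> /= /(congr1 (fun k : nat => (k%:R : rat))) => E; lra.
have S1 : \sum_(r : M.-tuple bool) (1 : rat) = (2 ^ M)%:R.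
  by rewrite sumr_const card_tup.
have E : \sum_r (X r + X (flipt j r) + 2 * H1 r) = \sum_r (1 + H0 r + H0 (flipt j r)).
  by apply: eq_bigr => r _; exact: pt.
rewrite !big_split /= -RX -R0 S1 -mulr_sumr in E.
rewrite -/(H0 _) -/(H1 _).
lra.
Qed.

Lemma avg (I : finType) (i0 : I) (F : I -> rat) c :
  (#|I|)%:R * c <= \sum_i F i -> exists i, c <= F i.
Proof.
move=> H; case: (boolP [exists i, c <= F i]) => [/existsP [i Hi]|H']; first by exists i.
have: \sum_i F i < \sum_(i : I) c.
  apply: ltr_sum; first by apply/hasP; exists i0; rewrite ?mem_index_enum.
  move=> i _; rewrite ltNge; apply/negP => Hi; move/negP: H'; apply.
  by apply/existsP; exists i.
rewrite sumr_const -mulr_natl => H2.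
by have := le_lt_trans H H2; rewrite ltxx.
Qed.

Lemma hybrid n M (HM : (0 < M)%N) (y : n.-tuple bool -> M.-tuple bool)
  (f : seq bool -> bool) (eps : rat) :
  eps <= prob [pred r : M.-tuple bool | f r] - prob [pred x : n.-tuple bool | f (y x)] ->
  exists j, (j < M)%N /\ exists r : M.-tuple bool,
   1 / 2 + eps / (M%:R) <= prob [pred x : n.-tuple bool |
     (if nth false r j then ~~ f (take j (y x) ++ drop j r)
      else f (take j (y x) ++ drop j r)) == nth false (y x) j].
Proof.
move=> Heps.
set a : rat := (2 ^ n)%:R. set b : rat := (2 ^ M)%:R.
have a0 : 0 < a by rewrite ltr0n expn_gt0.
have b0 : 0 < b by rewrite ltr0n expn_gt0.
pose S j := \sum_(x : n.-tuple bool) \sum_(r : M.-tuple bool)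
   ((f (take j (y x) ++ drop j r) : nat)%:R : rat).
set cf : rat := (#|[pred r : M.-tuple bool | f r]|)%:R.
set cy : rat := (#|[pred x : n.-tuple bool | f (y x)]|)%:R.
have S0 : S 0%N = a * cf.
  rewrite /S (eq_bigr (fun _ => cf)); last first.
    move=> x _; rewrite /cf -sum_ind; apply: eq_bigr => r _; by rewrite take0 drop0.
  by rewrite sumr_const card_tup -mulr_natl.
have SM : S M = b * cy.
  rewrite /S (eq_bigr (fun x => b * ((f (y x) : nat)%:R))); last first.
    move=> x _; rewrite take_oversize ?size_tuple //.
    rewrite (eq_bigr (fun _ => ((f (y x) : nat)%:R : rat))); last first.
      by move=> r _; rewrite drop_oversize ?size_tuple // cats0.
    by rewrite sumr_const card_tup /b mulr_natl.
  by rewrite -mulr_sumr /cy -sum_ind.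
have Hgap : a * b * eps <= S 0%N - S M.
  rewrite S0 SM.
  have E : a * b * (cf / b - cy / a) = a * cf - b * cy.
    by field; rewrite ?gt_eqF.
  rewrite -E; apply: ler_wpM2l; first by rewrite mulr_ge0 // ltW.
  exact: Heps.
have Htel : S 0%N - S M = \sum_(j < M) (S j - S j.+1).
  rewrite -(big_mkord xpredT (fun j => S j - S j.+1)).
  rewrite -[LHS]opprB -(telescope_sumr _ (leq0n M)) -sumrN.
  by apply: eq_bigr => j _; rewrite opprB.
have [j Hj] : exists j : 'I_M, a * b * eps / M%:R <= S j - S j.+1.
  apply: (avg (Ordinal HM)); rewrite card_ord -Htel mulrC mulfVK //.
  by rewrite pnatr_eq0 -lt0n.
exists j; split; first exact: ltn_ord.
pose Corr (r : M.-tuple bool) := \sum_(x : n.-tuple bool)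
  ((((if nth false r j then ~~ f (take j (y x) ++ drop j r)
      else f (take j (y x) ++ drop j r)) == nth false (y x) j) : nat)%:R : rat).
have Hsum : 2 * \sum_r Corr r = a * b + 2 * (S j - S j.+1).
  rewrite /Corr exchange_big /= mulr_sumr.
  rewrite (eq_bigr (fun x => b + 2 * (\sum_(r : M.-tuple bool) ((f (take j (y x) ++ drop j r) : nat)%:R : rat)
                    - \sum_(r : M.-tuple bool) ((f (take j.+1 (y x) ++ drop j.+1 r) : nat)%:R : rat)))); last first.
    by move=> x _; apply: per_x; rewrite ?size_tuple.
  rewrite big_split /= sumr_const card_tup -mulr_natl -/a -mulr_sumr sumrB.
  rewrite /S /a mulr_natl; lra.
have [r Hr] : exists r : M.-tuple bool, a * (1 / 2 + eps / M%:R) <= Corr r.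
  apply: (avg [tuple of nseq M false]); rewrite card_tup -/b.
  have HM' : 0 < (M%:R : rat) by rewrite ltr0n.
  have : a * b * eps / M%:R <= S j - S j.+1 := Hj.
  move: Hsum; set T := \sum_r Corr r; set D := S j - S j.+1 => Hs HD.
  have -> : b * (a * (1 / 2 + eps / M%:R)) = a * b / 2 + a * b * eps / M%:R.
    by field; rewrite gt_eqF.
  lra.
exists r.
rewrite /prob -/a ler_pdivlMr // mulrC.
by apply: (le_trans Hr); rewrite /Corr sum_ind.
Qed.

Lemma hw_nd_eval' D (x s : seq bool) i : size x = i ->
  nd_eval (hw D i s false) x = nd_eval D (x ++ s).
Proof. by move=> <-; exact: hw_nd_eval. Qed.

Lemma hw_cond_eval' D (x s : seq bool) i : size x = i ->
  cond_eval (hw D i s true) x = ~~ nd_eval D (x ++ s).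
Proof. by move=> <-; exact: hw_cond_eval. Qed.


Lemma inv_mono (P M P' : nat) : (0 < P)%N -> (0 < M)%N -> (P * M <= P')%N ->
  1 / (P'%:R) <= 1 / (P%:R) / (M%:R) :> rat.
Proof.
move=> HP HM HP'.
have HP'0 : (0 < P')%N by apply: leq_trans HP'; rewrite muln_gt0 HP HM.
rewrite !div1r -invfM -natrM lef_pV2 ?posrE ?ltr0n ?muln_gt0 ?HP ?HM //.
by rewrite ler_nat.
Qed.

Theorem proposition5p3 (m : nat -> nat) (g : generator m) :
  poly_computable g ->
  (forall n, (n < m n)%N) ->
  unpredictable NPpoly g ->
  unpredictable coNPpoly g ->
  super_bits g.
Proof.
move=> [C [[ga HCsz] HC]] Hm HnpN HnpC D [da HDsz] p Hp.
have Mb : forall n, (m n <= polyN ga n)%N.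
  move=> n; have := HC n [tuple of nseq n false]; move=> /(congr1 size).
  move=> E; rewrite -(size_tuple (g n [tuple of nseq n false])) -E /ceval size_map.
  by apply: leq_trans (HCsz n); rewrite /csize leq_addl.
have Mpos : forall n, (0 < m n)%N by move=> n; exact: leq_ltn_trans (leq0n n) (Hm n).
pose gap n := prob [pred y : (m n).-tuple bool | nd_eval (D n) y]
            - prob [pred x : n.-tuple bool | nd_eval (D n) (g n x)].
case: (classic (exists N, forall n, (N <= n)%N -> gap n < 1 / (polyN p n)%:R))
  => [[N HN]|Hno]; first by exists N.
exfalso.
have Far : forall N, exists n, (N <= n)%N /\ 1 / (polyN p n)%:R <= gap n.
  move=> N; apply: NNPP => H; apply: Hno; exists N => n Hn.
  rewrite ltNge; apply/negP => H'; apply: H; by exists n.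
pose Qp n j (rs : seq bool) := [pred x : n.-tuple bool |
  (if nth false rs j then ~~ nd_eval (D n) (take j (g n x) ++ drop j rs)
   else nd_eval (D n) (take j (g n x) ++ drop j rs)) == nth false (g n x) j].
pose Good n (q : nat * seq bool) := (q.1 < m n)%N /\ size q.2 = m n /\
  1 / 2 + (1 / (polyN p n)%:R) / (m n)%:R <= prob (Qp n q.1 q.2).
pose sel n := epsilon (inhabits (0%N, [::] : seq bool)) (Good n).
have GoodFar : forall n, 1 / (polyN p n)%:R <= gap n -> Good n (sel n).
  move=> n Hf; apply: epsilon_spec.
  have [j [Hj [r Hr]]] := @hybrid n (m n) (Mpos n) (@g n) (fun s => nd_eval (D n) s) _ Hf.
  exists (j, tval r); split => //=; split; [exact: size_tuple | exact: Hr].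
pose jn n := minn (sel n).1 (m n).
pose rn n := take (m n) (sel n).2.
pose A b n := hw (D n) (jn n) (drop (jn n) (rn n)) b.
pose K := (size ga + size da + size p)%N.
have HX : forall n, (1 <= 1 + n ^ K.+1)%N by move=> n; rewrite leq_addr.
have Asz : forall b, poly_size_nd (A b).
  move=> b; exists (mpoly (cs ga + 2 * cs da + 2) K) => n.
  rewrite polyN_mpoly; apply: leq_trans (hw_size _ _ _ _) _.
  have H1 : (jn n + size (drop (jn n) (rn n)) <= m n)%N.
    rewrite size_drop size_take /jn; case: ltnP => H; lia.
  have H2 := @polyN_le ga n K ltac:(rewrite /K; lia).
  have H3 := @polyN_le da n K ltac:(rewrite /K; lia).
  have H4 := Mb n. have H5 := HDsz n. have H6 := HX n.
  move: H1 H2 H3 H4 H5 H6; set X := (1 + n ^ K.+1)%N; nia.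
pose P' := mpoly (2 * cs ga * cs p + 1) (K + K).+1.
have HP'nz : nonzero_poly P' by apply: mpoly_nz; rewrite addn1.
have HP'b : forall n, (polyN p n * m n <= polyN P' n)%N.
  move=> n; rewrite polyN_mpoly.
  have H2 := @polyN_le ga n K ltac:(rewrite /K; lia).
  have H3 := @polyN_le p n K ltac:(rewrite /K; lia).
  have H4 := Mb n.
  have E : (n ^ (K + K).+2 = n ^ K.+1 * n ^ K.+1)%N by rewrite -expnD addSn addnS.
  have H5 : (polyN p n * m n <= (cs p * (1 + n ^ K.+1)) * (cs ga * (1 + n ^ K.+1)))%N.
    by apply: leq_mul => //; apply: leq_trans H4 H2.
  rewrite E; apply: leq_trans H5 _; set x := (n ^ K.+1)%N.
  set u := cs p; set v := cs ga.
  have H6 : ((1 + x) * (1 + x) <= 2 * (1 + x * x))%N by nia.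
  have H7 : (u * (1 + x) * (v * (1 + x)) = (u * v) * ((1 + x) * (1 + x)))%N by ring.
  rewrite H7; apply: leq_trans (leq_mul (leqnn (u * v)) H6) _; nia.
have key : forall n b, (1 <= n)%N -> 1 / (polyN p n)%:R <= gap n ->
    nth false (sel n).2 (sel n).1 = b ->
    (jn n < m n)%N /\
    1 / 2 + 1 / (polyN P' n)%:R <= prob [pred x : n.-tuple bool |
      class_eval (if b then coNPpoly else NPpoly) (A b n) (take (jn n) (g n x))
        == nth false (g n x) (jn n)].
  move=> n b Hn Hf Hb.
  have [Hj [Hs Hpr]] := GoodFar n Hf.
  have Ej : jn n = (sel n).1 by rewrite /jn; apply/minn_idPl; exact: ltnW.
  have Er : rn n = (sel n).2 by rewrite /rn take_oversize // Hs.
  rewrite /A Ej Er; split => //.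
  have Heq : prob [pred x : n.-tuple bool |
      class_eval (if b then coNPpoly else NPpoly)
        (hw (D n) (sel n).1 (drop (sel n).1 (sel n).2) b) (take (sel n).1 (g n x))
        == nth false (g n x) (sel n).1] = prob (Qp n (sel n).1 (sel n).2).
    rewrite /prob; congr (_%:R / _); apply: eq_card => x; rewrite !inE.
    have Hsz : size (take (sel n).1 (g n x)) = (sel n).1.
      by rewrite size_take size_tuple Hj.
    by case: b Hb => Hb; rewrite Hb /=; [rewrite hw_cond_eval' | rewrite hw_nd_eval'].
  rewrite Heq; apply: le_trans Hpr; rewrite lerD2l; apply: inv_mono => //.
  exact: polyN_pos.
case: (classic (forall N, exists n, (N <= n)%N /\ 1 / (polyN p n)%:R <= gap n /\
          nth false (sel n).2 (sel n).1 = false)) => [HF|HT].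
  apply: HnpN; exists (A false); split; first exact: Asz.
  exists P'; split; first exact: HP'nz.
  move=> N; have [n [Hn [Hf Hb]]] := HF (maxn N 1).
  exists n; split; first by lia.
  have [Hj Hpr] := key n false ltac:(lia) Hf Hb.
  by exists (jn n); split.
have [N0 HN0] := not_all_ex_not _ _ HT.
apply: HnpC; exists (A true); split; first exact: Asz.
exists P'; split; first exact: HP'nz.
move=> N; have [n [Hn Hf]] := Far (maxn (maxn N N0) 1).
exists n; split; first by lia.
have Hb : nth false (sel n).2 (sel n).1 = true.
  case E: (nth false (sel n).2 (sel n).1) => //; exfalso; apply: HN0.
  by exists n; split; [lia | split].
have [Hj Hpr] := key n true ltac:(lia) Hf Hb.
by exists (jn n); split.
Qed.
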